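(* Let $A$ be a finite group with a normal subgroup $G$ such that $A/G$ is cyclic. Let $X,Y\in A$ have the same image in $A/G$. Suppose there is a positive integer $r$ such that $X^r$ is conjugate to $Y^r$ in $A$ but $X^d$ is not conjugate to $Y^d$ in $A$ for every proper divisor $d$ of $r$. Then $r$ divides $|G|$.
   Context: A proper divisor of a positive integer $n$ is a positive divisor of $n$ strictly less than $n$. *)

(* Defs.v *)
From mathcomp Require Import all_boot all_fingroup all_solvable.
Set Implicit Arguments.
Unset Strict Implicit.
Unset Printing Implicit Defensive.

(* Main.v *)
Require Import Defs.
From mathcomp Require Import all_boot all_fingroup all_solvable.
Set Implicit Arguments. Unset Strict Implicit. Unset Printing Implicit Defensive.
Open Scope group_scope.

Lemma pgrp_pow (p : nat) : forall m (gT : finGroupType) (P N : {group gT}) (x n : gT),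
  p.-group P -> N <| P -> #|N| = m -> x \in P -> n \in N ->
  (x * n) ^+ m \in (x ^+ m) ^: P.
Proof.
elim/ltn_ind=> m IH gT P N x n pP nNP cN xP nN.
have sNP := normal_sub nNP.
case: (eqVneq N 1%G) => [N1|ntN].
  move: nN cN; rewrite N1 inE cards1 => /eqP -> <-.
  by rewrite mulg1 class_refl.
have := meet_center_nil (pgroup_nil pP) nNP ntN.
have pNZ : p.-group (N :&: 'Z(P)) by apply: pgroupS pP; rewrite subIset // sNP.
case/(pgroup_pdiv pNZ) => pr_p pdiv _.
case: (Cauchy pr_p pdiv) => z /setIP [zN zZ] oz.
set Z := <[z]>%G.
have sZN : Z \subset N by rewrite cycle_subG.
have cZP : P \subset 'C(Z).
  by rewrite centsC cycle_subG; case/centerP: zZ => _ H; apply/centP => y /H.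
have nZP : P \subset 'N(Z) by apply: subset_trans cZP (cent_sub _).
have cardZ : #|Z| = p by rewrite -oz.
have pm : p %| m by rewrite -cN -cardZ cardSg.
set m' := m %/ p.
have mm : m = (m' * p)%N by rewrite divnK.
have m'lt : m' < m.
  rewrite /m' ltn_Pdiv ?prime_gt1 //; rewrite -cN; exact: cardG_gt0.
have cNZ : #|N / Z| = m'.
  by rewrite card_quotient ?(subset_trans sNP nZP) // -divgS // cN cardZ.
have := IH m' m'lt _ (P / Z)%G (N / Z)%G (coset Z x) (coset Z n)
  (quotient_pgroup _ pP) (quotient_normal _ nNP) cNZ (mem_quotient _ xP) (mem_quotient _ nN).
case/imsetP=> g' /morphimP [g gN gP ->].
have xN : x \in 'N(Z) := subsetP nZP x xP.
have nNN : n \in 'N(Z) := subsetP nZP n (subsetP sNP n nN).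
rewrite -morphM // -!morphX ?groupM // -morphJ ?groupX //.
move/rcoset_kercosetP.
rewrite !(groupM, groupX, groupJ, groupV) // => /(_ isT isT) /rcosetP [z' z'Z E].
rewrite mm expgM E expgMn.
  rewrite -cardZ (expg_cardG z'Z) mul1g -conjXg -expgM.
  exact: memJ_class.
have: x ^+ m' ^ g \in 'C(Z) by apply: (subsetP cZP); rewrite groupJ ?groupX.
by move/centP => /(_ z' z'Z) /commute_sym.
Qed.

Lemma class_pow (gT : finGroupType) (H : {group gT}) (w y : gT) t :
  w \in y ^: H -> w ^+ t \in y ^+ t ^: H.
Proof. by case/imsetP => g gH ->; rewrite -conjXg memJ_class. Qed.

Lemma local_step p k (gT : finGroupType) (A G C : {group gT}) (u v : gT) :
  prime p -> G <| A -> [~: A, A] \subset G -> C \subset A -> #|G|`_p %| p ^ k ->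
  u \in C -> v \in C -> p.-elt u -> p.-elt v -> u^-1 * v \in G ->
  v ^+ (p ^ k) \in (u ^+ (p ^ k)) ^: C.
Proof.
move=> pr_p nGA dAG sCA Gp uC vC pu pv uvG.
have [P sylP uP] := Sylow_superset (p:=p) (G:=C) (Q:=<[u]>%G) (introT idP (etrans (cycle_subG u C) uC)) pu.
have [Q sylQ vQ] := Sylow_superset (p:=p) (G:=C) (Q:=<[v]>%G) (introT idP (etrans (cycle_subG v C) vC)) pv.
have [h hC QPh] := Sylow_trans sylP sylQ.
have sPC : P \subset C := pHall_sub sylP.
have pP : p.-group P := pHall_pgroup sylP.
have vQ' : v \in Q by rewrite -cycle_subG.
set v' := v ^ h^-1.
have v'P : v' \in P by rewrite -(memJ_conjg P h) /v' conjgKV -QPh.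
have uP' : u \in P by rewrite -cycle_subG.
have hA : h \in A := subsetP sCA h hC.
have vA : v \in A := subsetP sCA v vC.
have nG : u^-1 * v' \in G.
  rewrite /v' conjg_mulR mulgA groupM //.
  by apply: (subsetP dAG); apply: mem_commg; rewrite ?groupV.
set N := (P :&: G)%G.
have nNP : N <| P := normalGI (subset_trans sPC sCA) nGA.
have nN : u^-1 * v' \in N by rewrite inE groupM ?groupV ?nG.
have := pgrp_pow pP nNP (erefl _) uP' nN.
rewrite mulKVg.
have dN : #|N| %| p ^ k.
  have pN : p.-group N := pgroupS (subsetIl _ _) pP.
  rewrite -(part_pnat_id pN); apply: dvdn_trans Gp.
  by apply: partn_dvd => //; rewrite cardSg // subsetIr.
case/dvdnP: dN => t Ht.
move/(class_pow t); rewrite -!expgM mulnC -Ht.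
case/imsetP => g gP E.
have -> : v = v' ^ h by rewrite /v' conjgKV.
by rewrite -conjXg E -conjgM memJ_class // groupM // (subsetP sPC).
Qed.

Lemma p'_root p (gT : finGroupType) (a b : gT) :
  prime p -> p^'.-elt a -> p^'.-elt b -> a ^+ p = b ^+ p -> a = b.
Proof.
move=> pr_p pa pb E.
have cob : coprime #|<[b]>| p by apply: (p'nat_coprime pb); exact: pnat_id.
have coa : coprime #|<[a]>| p by apply: (p'nat_coprime pa); exact: pnat_id.
have Ea : a = (b ^+ p) ^+ (expg_invn <[a]> p).
  by rewrite -E (expgK coa) // cycle_id.
have cab : commute a (b^-1).
  by rewrite Ea -expgM; apply: commute_sym; apply: commuteX; apply: commute_sym; apply: commuteV; apply: commute_refl.
have c1 : (a * b^-1) ^+ p = 1 by rewrite expgMn // expgVn E mulgV.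
have cb : a * b^-1 \in <[b]> by rewrite groupM ?groupV ?cycle_id // Ea -expgM mem_cycle.
have : #[a * b^-1] %| gcdn #|<[b]>| p.
  rewrite dvdn_gcd (order_dvdG cb) /=. by rewrite order_dvdn c1.
rewrite (eqP cob) dvdn1 order_eq1 => /eqP H.
by rewrite -[a](mulgKV b) H mul1g.
Qed.

Lemma conj_comm (gT : finGroupType) (x y : gT) : commute x y -> x ^ y = x.
Proof. by move=> H; rewrite conjgE H mulKg. Qed.

Lemma ab_comm (gT : finGroupType) (B : {group gT}) x y :
  abelian B -> x \in B -> y \in B -> commute x y.
Proof. by move=> abB xB yB; apply: (centsP abB). Qed.

Lemma coset_eq_mem (gT : finGroupType) (G : {group gT}) x y :
  x \in 'N(G) -> y \in 'N(G) -> coset G x = coset G y -> x^-1 * y \in G.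
Proof.
move=> xN yN /(rcoset_kercosetP xN yN) /rcosetP [k kG ->].
by rewrite invMg -mulgA -conjgE memJ_norm ?groupV.
Qed.

Theorem lemma6p3 (gT : finGroupType) (A G : {group gT}) (X Y : gT) (r : nat) :
  G <| A -> cyclic (A / G) ->
  X \in A -> Y \in A -> coset G X = coset G Y ->
  0 < r ->
  Y ^+ r \in (X ^+ r) ^: A ->
  (forall d : nat, d %| r -> d < r -> Y ^+ d \notin (X ^+ d) ^: A) ->
  r %| #|G|.
Proof.
move=> nGA cycAG XA YA cXY r0 Hr Hd.
have abAG := cyclic_abelian cycAG.
have nAG : A \subset 'N(G) := normal_norm nGA.
have dAG : [~: A, A] \subset G := der1_min nAG abAG.
apply/(dvdn_partP _ r0) => p pi_p.
apply/negPn/negP => ndiv.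
have pr_p : prime p by move: pi_p; rewrite mem_primes => /and3P[].
set a := logn p r.
have a0 : 0 < a by rewrite logn_gt0.
set s := (p ^ a.-1)%N.
have qs : (r`_p = s * p)%N by rewrite p_part -expnSr prednK.
set e := (r`_p^')%N.
have rd : r = (s * e * p)%N by rewrite -(partnC p r0) qs mulnAC.
set d := (s * e)%N.
have Gp : (#|G|`_p %| p ^ a.-1)%N.
  rewrite p_part dvdn_exp2l //; rewrite leqNgt; apply/negP => lt.
  apply: (negP ndiv); apply: dvdn_trans (dvdn_part p #|G|).
  by rewrite !p_part dvdn_exp2l // -/a -(prednK a0).
have d0 : 0 < d by move: r0; rewrite rd muln_gt0 => /andP[].
have dr : d %| r by rewrite rd dvdn_mulr.
have dlt : d < r by rewrite rd ltn_Pmulr ?prime_gt1.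
apply: (negP (Hd d dr dlt)).
case/imsetP: Hr => g gA Eg.
set X' := X ^ g.
have X'A : X' \in A by rewrite groupJ.
have EX' : X' ^+ r = Y ^+ r by rewrite /X' -conjXg Eg.
have cX' : coset G X' = coset G Y.
  rewrite /X' morphJ ?(subsetP nAG) //.
  change (coset G X ^ coset G g = coset G Y); rewrite cXY conj_comm //.
  by apply: (ab_comm abAG); apply: mem_quotient.
rewrite -(classGidl _ gA) conjXg -/X'.
set x := X' ^+ d. set y := Y ^+ d.
have xyp : x ^+ p = y ^+ p by rewrite -!expgM -rd.
set E1 := X' ^+ e. set E2 := Y ^+ e.
have ex : x = E1 ^+ s by rewrite /x /d mulnC expgM.
have ey : y = E2 ^+ s by rewrite /y /d mulnC expgM.
set c := x.`_p^'.
have hc : y.`_p^' = c.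
  apply: (p'_root pr_p); rewrite ?p_elt_constt //.
  by rewrite -!consttX xyp.
set u := E1.`_p. set v := E2.`_p.
have xp : x.`_p = u ^+ s by rewrite ex consttX.
have yp : y.`_p = v ^+ s by rewrite ey consttX.
have E1A : E1 \in A by rewrite groupX.
have E2A : E2 \in A by rewrite groupX.
have cE1 : c \in <[E1]>.
  have : <[x]> \subset <[E1]> by rewrite cycle_subG ex mem_cycle.
  by move/subsetP; apply; apply: cycle_constt.
have cE2 : c \in <[E2]>.
  have : <[y]> \subset <[E2]> by rewrite cycle_subG ey mem_cycle.
  by move/subsetP; apply; rewrite -hc; apply: cycle_constt.
set C := 'C_A[c]%G.
have uC : u \in C.
  apply/subcent1P; split.
    by apply: (subsetP _ _ (cycle_constt p E1)); rewrite cycle_subG.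
  by apply: (ab_comm (cycle_abelian E1)) => //; apply: cycle_constt.
have vC : v \in C.
  apply/subcent1P; split.
    by apply: (subsetP _ _ (cycle_constt p E2)); rewrite cycle_subG.
  by apply: (ab_comm (cycle_abelian E2)) => //; apply: cycle_constt.
have uvG : u^-1 * v \in G.
  apply: coset_eq_mem.
  - by apply: (subsetP nAG); case/subcent1P: uC.
  - by apply: (subsetP nAG); case/subcent1P: vC.
  rewrite /u /v !morph_constt ?(subsetP nAG) //.
  rewrite /E1 /E2 !morphX ?(subsetP nAG) //.
  by change ((coset G X' ^+ e).`_p = (coset G Y ^+ e).`_p); rewrite cX'.
have sCA : C \subset A by apply: subsetIl.
have := local_step pr_p nGA dAG sCA Gp uC vC (p_elt_constt _ _) (p_elt_constt _ _) uvG.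
rewrite -/s -xp -yp.
case/imsetP => h hC Eh.
have hA : h \in A := subsetP sCA h hC.
have chc : c ^ h = c.
  by apply: conj_comm; case/subcent1P: hC.
rewrite -(consttC p y) Eh hc -{1}chc -conjMg consttC.
exact: memJ_class.
Qed.
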